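(* Let $R$ be a commutative ring and $I=(f_1,\dots,f_r)$ an ideal such that the Koszul homology algebra $H_\bullet(\mathbf f;R)$ is generated by elements of degree one. Then for any finitely generated ideal $\mathfrak a\subseteq I$, $\operatorname{Kitt}(\mathfrak a,I)=\operatorname{Fitt}_0(I/\mathfrak a)+\mathfrak a$. In particular this holds when $f_1,\dots,f_r$ is an almost regular sequence (i.e. $\operatorname{grade}(I)=r-1$). If $f_1,\dots,f_r$ is a regular sequence, then $\operatorname{Kitt}(\mathfrak a,I)=I_r(\Phi)+\mathfrak a$, where $\mathfrak a=(a_1,\dots,a_s)$ and $\Phi$ is an $r\times s$ matrix with $a_j=\sum_i\Phi_{ij}f_i$.
   Context: For $\mathfrak a=(a_1,\dots,a_s)\subseteq I$ and a matrix $(c_{ij})$ with $a_j=\sum_ic_{ij}f_i$: in the Koszul DG algebra $K_\bullet(\mathbf f;R)$ (exterior algebra on $e_1,\dots,e_r$, $\partial e_i=f_i$) let $\zeta_j=\sum_ic_{ij}e_i$, $\Gamma_\bullet$ the subalgebra generated by the $\zeta_j$, $Z_\bullet$ the subalgebra of cycles; $\operatorname{Kitt}(\mathfrak a,I)$ is the span of the products $\gamma\wedge z$ ($\gamma\in\Gamma_j$, $z\in Z_{r-j}$) in $K_r=Re_1\wedge\cdots\wedge e_r\cong R$, an ideal of $R$ independent of the choices. $I_r(\Phi)$ is the ideal of $r\times r$ minors of $\Phi$; $\operatorname{Fitt}_0$ is the zeroth Fitting ideal. *)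

(* Defs.v *)
(* Koszul DG algebra K(f;R) modelled as the exterior algebra
   over R on e_0..e_{r-1}: an element is a finite function from subsets
   S of 'I_r to R (coefficient of e_S, S listed increasingly). *)
From HB Require Import structures.
From mathcomp Require Import all_boot all_order all_algebra.
Set Implicit Arguments. Unset Strict Implicit. Unset Printing Implicit Defensive.
Import Order.TTheory GRing.Theory.
Local Open Scope ring_scope.

Section Koszul.
Variables (R : comPzRingType) (r : nat).

Local Notation kel := {ffun {set 'I_r} -> R}.

Definition kscale (c : R) (x : kel) : kel := [ffun S => c * x S].

(* sign of e_S /\ e_T = sgn S T * e_(S u T) for disjoint S, T *)
Definition ksgn (S T : {set 'I_r}) : R :=
  (-1) ^+ #|[set p : 'I_r * 'I_r | [&& p.1 \in S, p.2 \in T & (p.2 < p.1)%N]]|.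

Definition wedge (x y : kel) : kel :=
  [ffun U : {set 'I_r} => \sum_(S : {set 'I_r}) \sum_(T : {set 'I_r})
     (if (S :|: T == U) && [disjoint S & T] then ksgn S T * x S * y T else 0)].

Definition kone : kel := [ffun S => (S == set0)%:R].
Definition kgen (i : 'I_r) : kel := [ffun S => (S == [set i])%:R].

Definition wprod (s : seq kel) : kel := foldr wedge kone s.

(* Koszul differential: d e_i = f_i, extended as a graded derivation:
   d e_S = sum_{i in S} (-1)^{#{j in S | j < i}} f_i e_{S\i} *)
Definition kdiff (f : 'I_r -> R) (x : kel) : kel :=
  [ffun U : {set 'I_r} => \sum_(i : 'I_r | i \notin U)
     (-1) ^+ #|[set j in U | (j < i)%N]| * f i * x (i |: U)].

Definition homog (k : nat) (x : kel) := forall S : {set 'I_r}, #|S| != k -> x S = 0.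

Definition kcycle (f : 'I_r -> R) (k : nat) (x : kel) :=
  homog k x /\ kdiff f x = 0.
Definition kbound (f : 'I_r -> R) (k : nat) (x : kel) :=
  exists y, homog k.+1 y /\ x = kdiff f y.

Inductive kspan (P : kel -> Prop) : kel -> Prop :=
| kspan0 : kspan P 0
| kspan_gen x : P x -> kspan P x
| kspanD x y : kspan P x -> kspan P y -> kspan P (x + y)
| kspanZ (c : R) x : kspan P x -> kspan P (kscale c x).

(* the Koszul homology algebra H(f;R) is generated (as R-algebra) by
   elements of degree one: every homogeneous cycle of degree k is, modulo
   boundaries, an R-linear combination of k-fold products of degree-one
   cycles *)
Definition prod_deg1_cycles (f : 'I_r -> R) (k : nat) (x : kel) :=
  exists zs : k.-tuple kel, (forall z, z \in zs -> kcycle f 1 z) /\ x = wprod zs.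

Definition koszul_gen_deg1 (f : 'I_r -> R) :=
  forall k x, kcycle f k x ->
    exists y b, kspan (prod_deg1_cycles f k) y /\ kbound f k b /\ x = y + b.

Inductive ideal_gen (P : R -> Prop) : R -> Prop :=
| ideal0 : ideal_gen P 0
| ideal_in x : P x -> ideal_gen P x
| idealD x y : ideal_gen P x -> ideal_gen P y -> ideal_gen P (x + y)
| idealM (c : R) x : ideal_gen P x -> ideal_gen P (c * x).

Definition idealF (s : nat) (a : 'I_s -> R) : R -> Prop :=
  ideal_gen (fun x => exists j, x = a j).

Definition ideal_add (I J : R -> Prop) : R -> Prop :=
  fun x => exists u v, I u /\ J v /\ x = u + v.

Definition kzeta (s : nat) (c : 'M[R]_(r, s)) (j : 'I_s) : kel :=
  \sum_(i < r) kscale (c i j) (kgen i).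

Definition kGamma (s : nat) (c : 'M[R]_(r, s)) (j : nat) : kel -> Prop :=
  kspan (fun x => exists js : j.-tuple 'I_s, x = wprod (map (kzeta c) js)).

(* Kitt(a, I): span of the top coefficients (K_r = R e_1..e_r) of the
   products gamma /\ z with gamma in Gamma_j, z in Z_{r-j} *)
Definition Kitt (f : 'I_r -> R) (s : nat) (c : 'M[R]_(r, s)) : R -> Prop :=
  ideal_gen (fun x => exists j g z, (j <= r)%N /\ kGamma c j g /\
                        kcycle f (r - j) z /\ x = wedge g z setT).

(* Fitt_0(I/a), computed from the presentation of I/a on the generators
   (images of) f_1..f_r: ideal generated by the r x r minors of the matrix
   of relations, i.e. by det M for M whose columns are relations
   v with sum_i v_i f_i in a. *)
Definition Fitt0_quot (f : 'I_r -> R) (s : nat) (a : 'I_s -> R) : R -> Prop :=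
  ideal_gen (fun x => exists M : 'M[R]_r,
     (forall k : 'I_r, idealF a (\sum_(i < r) M i k * f i)) /\ x = \det M).

Definition minors_ideal (s : nat) (Phi : 'M[R]_(r, s)) : R -> Prop :=
  ideal_gen (fun x => exists g : 'I_r -> 'I_s, x = \det (colsub g Phi)).

Definition regular_seq (f : 'I_r -> R) :=
  (forall (i : 'I_r) (x : R),
     ideal_gen (fun y => exists j : 'I_r, (j < i)%N /\ y = f j) (x * f i) ->
     ideal_gen (fun y => exists j : 'I_r, (j < i)%N /\ y = f j) x) /\
  ~ idealF f 1.

Definition koszul_H_zero (f : 'I_r -> R) (k : nat) :=
  forall x, kcycle f k x -> kbound f k x.

(* almost regular: grade(I) = r - 1, grade measured by Koszul homology
   (grade I = r - max{k | H_k(f;R) <> 0}), i.e. H_1 <> 0 and H_k = 0, k >= 2 *)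
Definition almost_regular (f : 'I_r -> R) :=
  (0 < r)%N /\ ~ koszul_H_zero f 1 /\ forall k, (2 <= k)%N -> koszul_H_zero f k.

End Koszul.

Definition ideal_eq (R : comPzRingType) (I J : R -> Prop) := forall x, I x <-> J x.

(* Main.v *)
Require Import Defs.
From HB Require Import structures.
From mathcomp Require Import all_boot all_order all_algebra.
From mathcomp Require Import ring.
Set Implicit Arguments. Unset Strict Implicit. Unset Printing Implicit Defensive.
Import Order.TTheory GRing.Theory.
Local Open Scope ring_scope.

Section Ideal.
Variable (R : comPzRingType) (P : R -> Prop).
Local Notation J := (ideal_gen P).
Lemma idJ0 : J 0. Proof. exact: ideal0. Qed.
Lemma idJD x y : J x -> J y -> J (x + y). Proof. exact: idealD. Qed.
Lemma idJM c x : J x -> J (c * x). Proof. exact: idealM. Qed.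
Lemma idJMr c x : J x -> J (x * c). Proof. by rewrite mulrC; apply: idealM. Qed.
Lemma idJN x : J x -> J (- x). Proof. by move=> h; rewrite -mulN1r; apply: idealM. Qed.
Lemma idJB x y : J x -> J y -> J (x - y). Proof. by move=> hx hy; apply: idJD => //; apply: idJN. Qed.
Lemma idJsum (I : finType) (Q : pred I) (F : I -> R) :
  (forall i, Q i -> J (F i)) -> J (\sum_(i | Q i) F i).
Proof. by move=> h; apply: (big_ind J) => //; [exact: idJ0 | exact: idJD]. Qed.
Lemma idJsumS (I : eqType) (s : seq I) (Q : pred I) (F : I -> R) :
  (forall i, Q i -> J (F i)) -> J (\sum_(i <- s | Q i) F i).
Proof. by move=> h; apply: (big_ind J) => //; [exact: idJ0 | exact: idJD]. Qed.
End Ideal.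

Section K.
Variables (R : comPzRingType) (r : nat).
Local Notation kel := {ffun {set 'I_r} -> R}.
Implicit Types (x y z v w : kel) (S T U : {set 'I_r}) (i j k : 'I_r).

Definition sg (b : bool) : R := if b then -1 else 1.
Lemma sg2 b : sg b * sg b = 1. Proof. by case: b; rewrite /sg ?mulrNN mulr1. Qed.
Lemma sgF : sg false = 1. Proof. by []. Qed.
Lemma sg_lt (i k : 'I_r) : i != k -> sg (i < k)%N = - sg (k < i)%N.
Proof.
move=> ne; rewrite /sg; case: ltngtP => //; try by rewrite ?opprK.
by move/val_inj => e; rewrite e eqxx in ne.
Qed.

Definition ee U (i : 'I_r) : R := \prod_(j in U) sg (j < i)%N.

Lemma eeE U i : (-1) ^+ #|[set j in U | (j < i)%N]| = ee U i.
Proof.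
rewrite /ee -prodr_const (big_mkcond (fun j => j \in _)) /= (big_mkcond (fun j => j \in U)) /=.
apply: eq_bigr => j _; rewrite inE; case: (j \in U) => //=; by case: (j < i)%N.
Qed.

Lemma ee_U1 U i k : i \notin U -> ee (i |: U) k = sg (i < k)%N * ee U k.
Proof. by move=> h; rewrite /ee big_setU1. Qed.
Lemma ee_D1 U i k : k \in U -> ee U i = sg (k < i)%N * ee (U :\ k) i.
Proof. by move=> h; rewrite /ee (big_setD1 _ h). Qed.
Lemma ee_self U i : ee (U :\ i) i = ee U i.
Proof.
case: (boolP (i \in U)) => h; first by rewrite (ee_D1 _ h) ltnn sgF mul1r.
by congr ee; apply/setP => j; rewrite !inE; case: eqP => // ->; rewrite (negbTE h).
Qed.
Lemma ee2 U i : ee U i * ee U i = 1.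
Proof. rewrite /ee -big_split /=; apply: big1 => j _; exact: sg2. Qed.
Lemma ee0 i : ee set0 i = 1. Proof. by rewrite /ee big_set0. Qed.

Lemma ksgnE S T : ksgn R S T = \prod_(p in S) \prod_(q in T) sg (q < p)%N.
Proof.
rewrite /ksgn -prodr_const.
rewrite pair_big_dep /=.
rewrite [RHS]big_mkcond [LHS]big_mkcond /=.
apply: eq_bigr => [[p q]] _ /=; rewrite inE /=.
case: (p \in S); case: (q \in T) => //=; by case: (q < p)%N.
Qed.

(* left multiplication by a degree-one element *)
Definition lw v x : kel :=
  [ffun U : {set 'I_r} => \sum_(i in U) ee U i * v [set i] * x (U :\ i)].

Definition d1 (f : 'I_r -> R) v : R := \sum_i f i * v [set i].

Lemma kscaleE c x S : kscale c x S = c * x S. Proof. by rewrite ffunE. Qed.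

Section Diff.
Variable f : 'I_r -> R.
Lemma kdiffE x U : kdiff f x U = \sum_(i | i \notin U) ee U i * f i * x (i |: U).
Proof. by rewrite ffunE; apply: eq_bigr => i _; rewrite eeE. Qed.
Lemma kdiffD x y : kdiff f (x + y) = kdiff f x + kdiff f y.
Proof. apply/ffunP => U; rewrite !ffunE -big_split; apply: eq_bigr => i _; rewrite !ffunE /=; ring. Qed.
Lemma kdiffZ c x : kdiff f (kscale c x) = kscale c (kdiff f x).
Proof. apply/ffunP => U; rewrite !ffunE mulr_sumr; apply: eq_bigr => i _; rewrite !ffunE /=; ring. Qed.
Lemma kdiff0 : kdiff f 0 = 0.
Proof. apply/ffunP => U; rewrite !ffunE; apply: big1 => i _; rewrite !ffunE /=; ring. Qed.
Lemma kdiffN x : kdiff f (- x) = - kdiff f x.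
Proof. apply/ffunP => U; rewrite !ffunE -sumrN; apply: eq_bigr => i _; rewrite !ffunE /=; ring. Qed.
Lemma kdiffB x y : kdiff f (x - y) = kdiff f x - kdiff f y.
Proof. by rewrite kdiffD kdiffN. Qed.
Lemma kdiffT x : kdiff f x setT = 0.
Proof. by rewrite kdiffE big_pred0 // => i; rewrite in_setT. Qed.
End Diff.

Lemma lwD_r v x y : lw v (x + y) = lw v x + lw v y.
Proof. apply/ffunP => U; rewrite !ffunE -big_split; apply: eq_bigr => i _; rewrite !ffunE /=; ring. Qed.
Lemma lwZ_r v c x : lw v (kscale c x) = kscale c (lw v x).
Proof. apply/ffunP => U; rewrite !ffunE mulr_sumr; apply: eq_bigr => i _; rewrite !ffunE /=; ring. Qed.
Lemma lw0_r v : lw v 0 = 0.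
Proof. apply/ffunP => U; rewrite !ffunE; apply: big1 => i _; rewrite !ffunE /=; ring. Qed.
Lemma lwD_l v w x : lw (v + w) x = lw v x + lw w x.
Proof. apply/ffunP => U; rewrite !ffunE -big_split; apply: eq_bigr => i _; rewrite !ffunE /=; ring. Qed.
Lemma lwZ_l c v x : lw (kscale c v) x = kscale c (lw v x).
Proof. apply/ffunP => U; rewrite !ffunE mulr_sumr; apply: eq_bigr => i _; rewrite !ffunE /=; ring. Qed.
Lemma lw0_l x : lw 0 x = 0.
Proof. apply/ffunP => U; rewrite !ffunE; apply: big1 => i _; rewrite !ffunE /=; ring. Qed.
Lemma lw_suml (I : finType) (F : I -> kel) x : lw (\sum_i F i) x = \sum_i lw (F i) x.
Proof.
apply: (big_morph (fun v => lw v x)); [exact: (fun v w => lwD_l v w x) | exact: lw0_l].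
Qed.

Lemma wedgeD_l x y z : wedge (x + y) z = wedge x z + wedge y z.
Proof.
apply/ffunP => U; rewrite !ffunE -big_split; apply: eq_bigr => S _.
rewrite -big_split; apply: eq_bigr => T _; rewrite !ffunE; case: ifP => _ /=; ring.
Qed.
Lemma wedgeZ_l c x z : wedge (kscale c x) z = kscale c (wedge x z).
Proof.
apply/ffunP => U; rewrite !ffunE mulr_sumr; apply: eq_bigr => S _.
rewrite mulr_sumr; apply: eq_bigr => T _; rewrite !ffunE; case: ifP => _ /=; ring.
Qed.
Lemma wedge0_l z : wedge 0 z = 0.
Proof.
apply/ffunP => U; rewrite !ffunE; apply: big1 => S _; apply: big1 => T _.
rewrite !ffunE; case: ifP => _ /=; ring.
Qed.
Lemma wedgeD_r x y z : wedge x (y + z) = wedge x y + wedge x z.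
Proof.
apply/ffunP => U; rewrite !ffunE -big_split; apply: eq_bigr => S _.
rewrite -big_split; apply: eq_bigr => T _; rewrite !ffunE; case: ifP => _ /=; ring.
Qed.
Lemma wedgeZ_r c x z : wedge x (kscale c z) = kscale c (wedge x z).
Proof.
apply/ffunP => U; rewrite !ffunE mulr_sumr; apply: eq_bigr => S _.
rewrite mulr_sumr; apply: eq_bigr => T _; rewrite !ffunE; case: ifP => _ /=; ring.
Qed.
Lemma wedge0_r z : wedge z 0 = 0.
Proof.
apply/ffunP => U; rewrite !ffunE; apply: big1 => S _; apply: big1 => T _.
rewrite !ffunE; case: ifP => _ /=; ring.
Qed.

Lemma disj0l (A : {set 'I_r}) : [disjoint set0 & A].
Proof. by rewrite disjoints_subset sub0set. Qed.
Lemma disj0r (A : {set 'I_r}) : [disjoint A & set0].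
Proof. by rewrite disjoint_sym disj0l. Qed.

Lemma wedge1l y : wedge (kone R r) y = y.
Proof.
apply/ffunP => U; rewrite ffunE (bigD1 set0) //=.
rewrite [X in _ + X]big1 ?addr0; last first.
  by move=> S nS; apply: big1 => T _; rewrite ffunE (negbTE nS); case: ifP => _ /=; ring.
rewrite (bigD1 U) //= [X in _ + X]big1 ?addr0; last first.
  by move=> T nT; rewrite set0U (negbTE nT).
rewrite set0U eqxx disj0l /= ksgnE big_set0 ffunE eqxx /=; ring.
Qed.

Lemma wedge1r y : wedge y (kone R r) = y.
Proof.
apply/ffunP => U; rewrite ffunE (bigD1 U) //=.
rewrite [X in _ + X]big1 ?addr0; last first.
  move=> S nS; apply: big1 => T _; rewrite ffunE; case: (eqVneq T set0) => [->|nT] /=.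
    by rewrite setU0 (negbTE nS).
  by case: ifP => _ /=; ring.
rewrite (bigD1 set0) //= [X in _ + X]big1 ?addr0; last first.
  by move=> T nT; rewrite ffunE (negbTE nT); case: ifP => _ /=; ring.
rewrite setU0 eqxx disj0r /= ksgnE ffunE eqxx /=.
rewrite big1 ?mul1r ?mulr1 // => p _; exact: big_set0.
Qed.

Lemma setDUK S U : S \subset U -> S :|: (U :\: S) = U.
Proof.
move=> hs; apply/setP => j; rewrite !inE; case: (boolP (j \in S)) => h //=.
by rewrite (subsetP hs).
Qed.

Lemma wedge_cond S T U :
  (S :|: T == U) && [disjoint S & T] = (S \subset U) && (T == U :\: S).
Proof.
apply/idP/idP.
  move/andP=> [/eqP <- hd]; rewrite subsetUl /= setDUl setDv set0U.
  by rewrite disjoint_sym in hd; move/setDidPl: hd => ->.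
move/andP=> [hs /eqP ->]; rewrite setDUK // eqxx /=.
by rewrite disjoints_subset setCD subsetUr.
Qed.

Lemma wedgeE x y U :
  wedge x y U = \sum_(S : {set 'I_r} | S \subset U) ksgn R S (U :\: S) * x S * y (U :\: S).
Proof.
rewrite ffunE [RHS]big_mkcond; apply: eq_bigr => S _.
under eq_bigr do rewrite wedge_cond.
case: (boolP (S \subset U)) => hs /=; last by apply: big1.
by rewrite -big_mkcond big_pred1_eq.
Qed.

Lemma sum_singl (G : {set 'I_r} -> R) :
  (forall S, #|S| != 1%N -> G S = 0) -> \sum_S G S = \sum_i G [set i].
Proof.
move=> h.
transitivity (\sum_S \sum_i (if S == [set i] then G S else 0)).
  apply: eq_bigr => S _; case: (boolP (#|S| == 1%N)) => hS; last first.
    by rewrite h // big1 // => i _; case: ifP.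
  move/cards1P: hS => [x ->]; rewrite (bigD1 x) //= eqxx big1 ?addr0 // => i ni.
  by rewrite (inj_eq set1_inj) eq_sym (negbTE ni).
rewrite exchange_big; apply: eq_bigr => i _; by rewrite -big_mkcond big_pred1_eq.
Qed.

Lemma wedge_lw v x : homog 1 v -> wedge v x = lw v x.
Proof.
move=> hv; apply/ffunP => U; rewrite wedgeE ffunE.
rewrite big_mkcond sum_singl /=; last first.
  by move=> S hS; rewrite hv //; case: ifP => _; rewrite ?mulr0 ?mul0r.
rewrite [RHS]big_mkcond; apply: eq_bigr => i _; rewrite sub1set.
case: ifP => // hi; rewrite ksgnE big_set1; congr (_ * _ * _).
by rewrite -ee_self.
Qed.

Lemma sum_toggle i (G : {set 'I_r} -> R) :
  \sum_(S : {set 'I_r} | i \in S) G S = \sum_(S : {set 'I_r} | i \notin S) G (i |: S).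
Proof.
pose tg S := if i \in S then S :\ i else i |: S.
have tgK : involutive tg.
  move=> S; rewrite /tg; case: (boolP (i \in S)) => h.
    by rewrite setD11 setD1K.
  by rewrite setU11 setU1K.
rewrite (reindex_inj (inv_inj tgK)) /=; apply: eq_big => S.
  by rewrite /tg; case: (boolP (i \in S)) => h; rewrite ?setD11 ?setU11.
by rewrite /tg; case: (boolP (i \in S)) => h; rewrite ?setD11 ?setU11.
Qed.

Lemma ksgn_U1 i S T : i \notin S -> ksgn R (i |: S) T = ee T i * ksgn R S T.
Proof. by move=> h; rewrite !ksgnE big_setU1. Qed.

Lemma ee_U (U V : {set 'I_r}) i : [disjoint U & V] -> ee (U :|: V) i = ee U i * ee V i.
Proof. by move=> h; rewrite /ee -bigU //; apply: eq_bigl => j; rewrite !inE. Qed.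

Lemma lw_assoc v x y : wedge (lw v x) y = lw v (wedge x y).
Proof.
apply/ffunP => U; rewrite wedgeE ffunE.
under eq_bigr do rewrite ffunE mulr_sumr mulr_suml.
rewrite (exchange_big_dep xpredT) //=.
under [RHS]eq_bigr do rewrite wedgeE mulr_sumr.
rewrite [RHS](big_mkcond (fun i => i \in U)) /=.
apply: eq_bigr => i _.
rewrite (eq_bigl (fun S => (i \in S) && (S \subset U))) => [|S]; last by rewrite andbC.
rewrite big_mkcondr sum_toggle.
case: (boolP (i \in U)) => hi; last first.
  apply: big1 => S _; rewrite subUset sub1set (negbTE hi) //.
rewrite -big_mkcondr.
rewrite [LHS](eq_bigl (fun S => S \subset U :\ i)) => [|S]; last first.
  by rewrite subUset sub1set hi subsetD1 andbC.
apply: eq_bigr => S hS.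
have hiS : i \notin S by move: hS; rewrite subsetD1 => /andP[].
have eW : U :\: (i |: S) = U :\ i :\: S by rewrite setDDl.
rewrite eW setU1K // ee_U1 // ltnn sgF mul1r ksgn_U1 //.
have -> : ee U i = ee (U :\ i :\: S) i * ee S i.
  rewrite -ee_self -{1}(setDUK hS) ee_U; first by rewrite mulrC.
  by rewrite disjoints_subset setCD subsetUr.
rewrite /=; ring.
Qed.

Lemma foldr_lw_hom (zs : seq kel) z :
  (forall v, v \in zs -> homog 1 v) -> foldr (@wedge R r) z zs = foldr lw z zs.
Proof.
elim: zs => [|v zs IH] h //=.
have hv : homog 1 v by apply: h; rewrite mem_head.
rewrite (@wedge_lw v _ hv) IH // => u hu; apply: h; by rewrite in_cons hu orbT.

Qed.

Lemma wedge_wprod (zs : seq kel) z :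
  (forall v, v \in zs -> homog 1 v) -> wedge (wprod zs) z = foldr lw z zs.
Proof.
rewrite /wprod; elim: zs => [|v zs IH] h /=; first by rewrite wedge1l.
have hv : homog 1 v by apply: h; rewrite mem_head.
rewrite (@wedge_lw v _ hv) lw_assoc IH // => u hu; apply: h; by rewrite in_cons hu orbT.
Qed.

Lemma setU1D1 i k U : k != i -> (i |: U) :\ k = i |: (U :\ k).
Proof.
move=> h; apply/setP => j; rewrite !inE; case: (eqVneq j i) => [->|] /=.
  by rewrite eq_sym h.
by [].
Qed.

Section Diff2.
Variable f : 'I_r -> R.

Lemma leib_L v x U :
  kdiff f (lw v x) U = \sum_(i | i \notin U) f i * v [set i] * x U +
    \sum_(i | i \notin U) \sum_(k in U)
      ee U i * f i * sg (i < k)%N * ee U k * v [set k] * x (i |: (U :\ k)).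
Proof.
rewrite kdiffE -big_split; apply: eq_bigr => i hi; rewrite ffunE (bigD1 i) ?setU11 //=.
rewrite mulrDr; congr (_ + _).
  rewrite ee_U1 // ltnn sgF mul1r setU1K //.
  transitivity (ee U i * ee U i * (f i * v [set i] * x U)); first by rewrite /=; ring.
  by rewrite ee2 mul1r.
rewrite mulr_sumr [LHS](eq_bigl (fun k => k \in U)) => [|k]; last first.
  rewrite in_setU1; case: (eqVneq k i) => [->|nk] /=; first by rewrite (negbTE hi).
  by rewrite andbT.
apply: eq_bigr => k hk.
have hki : k != i by apply: contraNneq hi => <-.
by rewrite ee_U1 // setU1D1 //=; ring.
Qed.

Lemma leib_R v x U :
  lw v (kdiff f x) U = \sum_(k in U) (f k * v [set k] * x U -
    \sum_(i | i \notin U)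
      ee U i * f i * sg (i < k)%N * ee U k * v [set k] * x (i |: (U :\ k))).
Proof.
rewrite ffunE; apply: eq_bigr => k hk; rewrite kdiffE (bigD1 k) ?setD11 //=.
rewrite mulrDr; congr (_ + _).
  rewrite ee_self setD1K //.
  transitivity (ee U k * ee U k * (f k * v [set k] * x U)); first by rewrite /=; ring.
  by rewrite ee2 mul1r.
rewrite mulr_sumr -sumrN [LHS](eq_bigl (fun i => i \notin U)) => [|i]; last first.
  rewrite in_setD1; case: (eqVneq i k) => [->|nk] /=; first by rewrite hk.
  by rewrite andbT.
apply: eq_bigr => i hi.
have hik : i != k by apply: contraNneq hi => ->.
rewrite (@ee_D1 U i k hk) (sg_lt hik).
transitivity (sg (k < i)%N * sg (k < i)%N *
   (ee U k * v [set k] * (ee (U :\ k) i * f i * x (i |: U :\ k)))).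
  by rewrite sg2 mul1r.
by rewrite /=; ring.
Qed.

Lemma leibniz v x : kdiff f (lw v x) = kscale (d1 f v) x - lw v (kdiff f x).
Proof.
apply/ffunP => U; rewrite leib_L ffunE kscaleE ffunE leib_R /d1 mulr_suml sumrB.
rewrite [X in _ = X - _](bigID (fun i => i \in U)) /=.
set G := fun i k => ee U i * f i * sg (i < k)%N * ee U k * v [set k] * x (i |: (U :\ k)).
have E : \sum_(k in U) \sum_(i | i \notin U) G i k = \sum_(i | i \notin U) \sum_(k in U) G i k.
  rewrite (exchange_big_dep (fun i => i \notin U)) //=; apply: eq_bigr => i hi.
  by apply: eq_bigl => k; rewrite hi andbT.
rewrite /G in E; rewrite E.
rewrite /=; ring.
Qed.

Lemma antisym_sum (Q : 'I_r -> 'I_r -> bool) (F : 'I_r -> 'I_r -> R) :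
  (forall i k, Q i k = Q k i) -> (forall i, Q i i = false) ->
  (forall i k, Q i k -> F k i = - F i k) ->
  \sum_i \sum_k (if Q i k then F i k else 0) = 0.
Proof.
move=> Qs Qi FA.
set X := \sum_i \sum_k (if Q i k && (i < k)%N then F i k else 0).
set Y := \sum_i \sum_k (if Q i k && (k < i)%N then F i k else 0).
have -> : \sum_i \sum_k (if Q i k then F i k else 0) = X + Y.
  rewrite /X /Y -big_split; apply: eq_bigr => i _; rewrite -big_split.
  apply: eq_bigr => k _; case: (boolP (Q i k)) => hq /=; last by rewrite addr0.
  case: ltngtP => h /=; rewrite ?addr0 ?add0r //.
  by move/val_inj: h => e; rewrite e Qi in hq.
have -> : Y = - X.
  rewrite /Y exchange_big /X -sumrN; apply: eq_bigr => i _; rewrite -sumrN.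
  apply: eq_bigr => k _; rewrite Qs; case: ifP => h; last by rewrite oppr0.
  by rewrite FA //; move/andP: h => [].
by rewrite addrN.
Qed.

Lemma kdkdE x U :
  kdiff f (kdiff f x) U = \sum_i \sum_k
    (if (i \notin U) && (k \notin U) && (k != i) then
       ee U i * sg (i < k)%N * ee U k * f i * f k * x (k |: (i |: U)) else 0).
Proof.
rewrite kdiffE big_mkcond; apply: eq_bigr => i _.
case: (boolP (i \notin U)) => hi /=; last by rewrite big1.
rewrite kdiffE mulr_sumr big_mkcond; apply: eq_bigr => k _.
rewrite in_setU1 negb_or; case: (eqVneq k i) => [->|nk] /=; first by rewrite andbF.
rewrite andbT; case: (k \in U) => //=.
by rewrite ee_U1 //=; ring.
Qed.

Lemma kdiff2 x : kdiff f (kdiff f x) = 0.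
Proof.
apply/ffunP => U; rewrite kdkdE ffunE.
apply: antisym_sum.
- by move=> i k; rewrite [X in X && _]andbC eq_sym.
- by move=> i; rewrite eqxx andbF.
move=> i k /andP [_ nk]; rewrite setUCA (sg_lt nk) /=; ring.
Qed.
End Diff2.

Lemma ee_D1' U i k : k \in U -> ee (U :\ k) i = sg (k < i)%N * ee U i.
Proof. by move=> h; rewrite (@ee_D1 U i k h) mulrA sg2 mul1r. Qed.

Lemma lwlwE v w y U :
  lw v (lw w y) U = \sum_i \sum_k
    (if (i \in U) && (k \in U) && (k != i) then
       ee U i * sg (i < k)%N * ee U k * v [set i] * w [set k] * y (U :\ i :\ k) else 0).
Proof.
rewrite ffunE big_mkcond; apply: eq_bigr => i _.
case: (boolP (i \in U)) => hi /=; last by rewrite big1.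
rewrite ffunE mulr_sumr big_mkcond; apply: eq_bigr => k _.
rewrite in_setD1; case: (eqVneq k i) => [->|nk] /=; first by rewrite andbF.
rewrite andbT; case: (k \in U) => //=.
by rewrite ee_D1' //=; ring.
Qed.

Lemma setD1C U i k : U :\ i :\ k = U :\ k :\ i.
Proof. by rewrite !setDDl setUC. Qed.

Lemma lw_anti v w y : lw v (lw w y) = - lw w (lw v y).
Proof.
apply/ffunP => U; rewrite [RHS]ffunE; apply/eqP; rewrite -addr_eq0; apply/eqP.
rewrite !lwlwE [X in _ + X]exchange_big -big_split; apply: big1 => i _.
rewrite -big_split; apply: big1 => k _ /=.
have -> : (k \in U) && (i \in U) && (i != k) = (i \in U) && (k \in U) && (k != i).
  by rewrite [X in X && _]andbC eq_sym.
case: ifP => h; last by rewrite addr0.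
move/andP: h => [_ nk]; rewrite (setD1C U k i) (sg_lt nk) /=; ring.
Qed.

Lemma homog0 n : homog n (0 : kel). Proof. by move=> S _; rewrite ffunE. Qed.
Lemma homogD n x y : homog n x -> homog n y -> homog n (x + y).
Proof. by move=> hx hy S hS; rewrite ffunE hx // hy // addr0. Qed.
Lemma homogN n x : homog n x -> homog n (- x).
Proof. by move=> hx S hS; rewrite ffunE hx // oppr0. Qed.
Lemma homogB n x y : homog n x -> homog n y -> homog n (x - y).
Proof. by move=> hx hy; apply: homogD => //; apply: homogN. Qed.
Lemma homogZ n c x : homog n x -> homog n (kscale c x).
Proof. by move=> hx S hS; rewrite ffunE hx // mulr0. Qed.
Lemma homog_sum n (I : finType) (F : I -> kel) :
  (forall t : I, homog n (F t)) -> homog n (\sum_(t : I) F t).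
Proof.
move=> h; apply: (big_ind (homog n)); [exact: homog0 | exact: homogD | by []].
Qed.
Lemma homog_lw n v x : homog n x -> homog n.+1 (lw v x).
Proof.
move=> hx U hU; rewrite ffunE big1 // => i hi; rewrite hx ?mulr0 //.
apply: contra hU; rewrite (cardsD1 i U) hi => /eqP ->; by [].
Qed.
Lemma homog_kdiff f n x : homog n.+1 x -> homog n (kdiff f x).
Proof.
move=> hx U hU; rewrite kdiffE big1 // => i hi; rewrite hx ?mulr0 //.
by rewrite cardsU1 hi /= add1n eqSS.
Qed.
Lemma homog_kone : homog 0 (kone R r).
Proof. move=> S hS; rewrite ffunE; case: eqP => // e; by rewrite e cards0 in hS. Qed.

Lemma kdiff_kone f : kdiff f (kone R r) = 0.
Proof.
apply/ffunP => U; rewrite kdiffE ffunE big1 // => i hi; rewrite ffunE.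
case: eqP => [e|_]; last by rewrite mulr0.
by have := setU11 i U; rewrite e inE.
Qed.

Lemma kdiff_deg1 f v : homog 1 v -> kdiff f v = kscale (d1 f v) (kone R r).
Proof.
move=> hv; apply/ffunP => U; rewrite kdiffE !ffunE.
case: eqP => [->|nU].
  rewrite mulr1 /d1 (eq_bigl xpredT) => [|i]; last by rewrite in_set0.
  by apply: eq_bigr => i _; rewrite ee0 mul1r setU0.
rewrite mulr0; apply: big1 => i hi; rewrite hv ?mulr0 // cardsU1 hi /= add1n eqSS.
by rewrite cards_eq0; apply/eqP.
Qed.

Lemma d1_cycle f v : kdiff f v = 0 -> d1 f v = 0.
Proof.
move=> h; have := congr1 (fun y => y set0) h; rewrite kdiffE ffunE => <-.
rewrite /d1 [RHS](eq_bigl xpredT) => [|i]; last by rewrite in_set0.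
by apply: eq_bigr => i _; rewrite ee0 mul1r setU0.
Qed.

Section Lists.
Lemma count_lt_nth (l : seq nat) a : sorted ltn l -> (a < size l)%N ->
  count (fun p => p < nth 0%N l a)%N l = a.
Proof.
elim: l a => [|x l IH] a //= hs ha.
have hp : all (ltn x) l.
  by apply: order_path_min hs => y z w; apply: ltn_trans.
have hl : sorted ltn l by move: hs; case: l {IH ha hp} => //= y l /andP[].
case: a ha => [|a] ha /=.
  rewrite ltnn add0n; apply/eqP; rewrite eqn0Ngt -has_count; apply/hasPn => y hy.
  by rewrite -leqNgt ltnW //; move/allP: hp => /(_ _ hy).
have hxa : (x < nth 0%N l a)%N by move/allP: hp; apply; apply: mem_nth.
by rewrite hxa IH.
Qed.

Lemma filter_C1_id (T : eqType) (y : T) (s : seq T) : y \notin s -> filter (predC1 y) s = s.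
Proof. by move=> h; apply/all_filterP; apply/allP => z hz /=; apply: contraNneq h => <-. Qed.

Lemma filter_C1_nth (l : seq nat) a : uniq l -> (a < size l)%N ->
  filter (predC1 (nth 0%N l a)) l = take a l ++ drop a.+1 l.
Proof.
move=> hu ha.
have e : l = take a l ++ nth 0%N l a :: drop a.+1 l by rewrite -drop_nth // cat_take_drop.
move: hu; rewrite {1}e cat_uniq => /and3P [_ h1 /= /andP [h2 _]].
have h3 : nth 0%N l a \notin take a l.
  by apply: contra h1 => h; apply/hasP; exists (nth 0%N l a) => //; exact: mem_head.
by rewrite {2}e filter_cat /= eqxx /= !filter_C1_id.
Qed.

Lemma nth_bump (l : seq nat) a b : (a < size l)%N ->
  nth 0%N (take a l ++ drop a.+1 l) b = nth 0%N l (bump a b).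
Proof.
move=> ha; rewrite nth_cat (size_takel (ltnW ha)) /bump.
case: ltnP => hb.
  by rewrite nth_take // (leqNgt a b) hb add0n.
by rewrite nth_drop add1n addSn subnKC.
Qed.
End Lists.

Definition cf (v : kel) (p : nat) : R :=
  if (insub p : option 'I_r) is Some i then v [set i] else 0.
Lemma cf_val v i : cf v (val i) = v [set i].
Proof. by rewrite /cf valK. Qed.

Definition rows (S : {set 'I_r}) : seq nat := [seq val i | i <- enum S].

Lemma enum_filter S : enum S = filter (mem S) (enum 'I_r).
Proof. by rewrite enumT. Qed.

Lemma rows_sorted S : sorted ltn (rows S).
Proof.
have h : sorted ltn (map val (enum 'I_r)) by rewrite val_enum_ord iota_ltn_sorted.
rewrite /rows sorted_map enum_filter; rewrite sorted_map in h.
by apply: sorted_filter => // x y z; apply: ltn_trans.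
Qed.

Lemma rows_uniq S : uniq (rows S).
Proof. by rewrite /rows (map_inj_uniq val_inj) enum_uniq. Qed.

Lemma size_rows S : size (rows S) = #|S|.
Proof. by rewrite /rows size_map cardE. Qed.

Lemma nth_rows S (x0 : 'I_r) a : (a < #|S|)%N -> nth 0%N (rows S) a = val (nth x0 (enum S) a).
Proof. by move=> h; rewrite /rows (nth_map x0) // -cardE. Qed.

Lemma ee_nth S (x0 : 'I_r) a : (a < #|S|)%N -> ee S (nth x0 (enum S) a) = (-1) ^+ a.
Proof.
move=> ha; rewrite -eeE; congr (_ ^+ _).
rewrite -sum1dep_card -big_enum_cond sum1_count.
have -> : count (fun x : 'I_r => (x < nth x0 (enum S) a)%N) (enum S) =
    count (fun p => p < nth 0%N (rows S) a)%N (rows S).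
  by rewrite /rows count_map (nth_map x0) // -cardE.
by apply: count_lt_nth; [exact: rows_sorted | rewrite size_rows].
Qed.

Lemma rows_D1 S (x0 : 'I_r) a : (a < #|S|)%N ->
  rows (S :\ nth x0 (enum S) a) = take a (rows S) ++ drop a.+1 (rows S).
Proof.
move=> ha; set i := nth x0 (enum S) a.
rewrite -filter_C1_nth ?rows_uniq ?size_rows // (nth_rows x0 ha) -/i /rows filter_map.
congr map; rewrite (enum_filter (S :\ i)) (enum_filter S) -[RHS]filter_predI.
by apply: eq_filter => j /=; rewrite !inE (inj_eq val_inj) andbC.
Qed.

Definition DM n (vs : seq kel) S : 'M[R]_n :=
  \matrix_(a < n, k < n) cf (nth 0 vs k) (nth 0%N (rows S) a).

Lemma sum_ordE m1 m2 (H : nat -> R) : m1 = m2 -> \sum_(a < m1) H a = \sum_(a < m2) H a.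
Proof. by move=> ->. Qed.

Lemma detL (vs : seq kel) S : #|S| = size vs ->
  foldr lw (kone R r) vs S = \det (DM (size vs) vs S).
Proof.
elim: vs S => [|v vs IH] S hS /=.
  move/eqP: hS; rewrite cards_eq0 => /eqP ->; by rewrite ffunE eqxx det_mx00.
have [x0 _] : exists x0 : 'I_r, x0 \in S by apply/card_gt0P; rewrite hS.
pose ia a := nth x0 (enum S) a.
pose G a := ee S (ia a) * v [set ia a] * foldr lw (kone R r) vs (S :\ ia a).
rewrite ffunE (expand_det_col _ ord0).
transitivity (\sum_(a < #|S|) G a).
  by rewrite big_enum_val; apply: eq_bigr => a _; rewrite /G /ia (enum_val_nth x0).
rewrite (sum_ordE G hS); apply: eq_bigr => a _.
have ha : (a < #|S|)%N by rewrite hS.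
have hin : ia a \in S by rewrite -mem_enum /ia mem_nth // -cardE.
rewrite /G IH; last by move: hS; rewrite (cardsD1 (ia a)) hin => -[].
rewrite /cofactor !mxE /= (nth_rows x0 ha) -/(ia a) cf_val addn0.
have -> : row' a (col' ord0 (DM (size vs).+1 (v :: vs) S)) = DM (size vs) vs (S :\ ia a).
  apply/matrixP => b k; rewrite !mxE /= /ia rows_D1 // nth_bump //.
  by rewrite size_rows.
by rewrite /ia ee_nth //=; ring.
Qed.

Lemma detT (vs : seq kel) : size vs = r ->
  foldr lw (kone R r) vs setT = \det (\matrix_(i < r, k < r) (nth 0 vs k) [set i]).
Proof.
move=> h; have := @detL vs setT; rewrite cardsT card_ord h => /(_ erefl) ->.
congr (\det _); apply/matrixP => i k; rewrite !mxE.
have -> : nth 0%N (rows setT) i = val i.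
  by rewrite /rows enum_setT -enumT val_enum_ord nth_iota.
by rewrite cf_val.
Qed.

Lemma homog0_kone x : homog 0 x -> x = kscale (x set0) (kone R r).
Proof.
move=> h; apply/ffunP => S; rewrite !ffunE; case: eqP => [->|nS]; first by rewrite mulr1.
by rewrite mulr0 h // cards_eq0; apply/eqP.
Qed.

Definition mk1 (g : 'I_r -> R) : kel := [ffun S => \sum_j (S == [set j])%:R * g j].
Lemma mk1_set1 g i : mk1 g [set i] = g i.
Proof.
rewrite ffunE (bigD1 i) //= eqxx mul1r big1 ?addr0 // => j nj.
by rewrite (inj_eq set1_inj) eq_sym (negbTE nj) mul0r.
Qed.
Lemma homog_mk1 g : homog 1 (mk1 g).
Proof.
move=> S hS; rewrite ffunE big1 // => j _; case: eqP => [e|_]; last by rewrite mul0r.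
by rewrite e cards1 in hS.
Qed.
Lemma d1_mk1 f g : d1 f (mk1 g) = \sum_i f i * g i.
Proof. by apply: eq_bigr => i _; rewrite mk1_set1. Qed.

Lemma kdiff_set0 f x : kdiff f x set0 = d1 f x.
Proof.
rewrite kdiffE /d1 (eq_bigl xpredT) => [|i]; last by rewrite in_set0.
by apply: eq_bigr => i _; rewrite ee0 mul1r setU0.
Qed.

Section Acyc.
Variable f : 'I_r -> R.
Definition sup m x := forall S (i : 'I_r), i \in S -> (m <= i)%N -> x S = 0.
Definition Jm m := ideal_gen (fun p : R => exists j : 'I_r, (j < m)%N /\ p = f j).

Lemma ffunBE (a b : kel) S : (a - b) S = a S - b S.
Proof. by rewrite !ffunE. Qed.

Lemma supD m x y : sup m x -> sup m y -> sup m (x + y).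
Proof. by move=> hx hy S i hi hm; rewrite ffunE (hx S i) // (hy S i) // addr0. Qed.

Lemma sup_mono m m' x : (m <= m')%N -> sup m x -> sup m' x.
Proof. by move=> hm h S i hi hi'; apply: (h S i hi); apply: leq_trans hi'. Qed.

Lemma extract m t : Jm m t ->
  exists g : 'I_r -> R, (forall j : 'I_r, (m <= j)%N -> g j = 0) /\ t = \sum_j g j * f j.
Proof.
elim => [|p [j [hj ->]]|p q _ [g1 [h1 ->]] _ [g2 [h2 ->]]|c p _ [g [h ->]]].
- by exists (fun _ => 0); split => //; rewrite big1 // => j _; rewrite mul0r.
- exists (fun k => (k == j)%:R); split.
    by move=> k hk; case: eqP => // e; move: hk; rewrite e leqNgt hj.
  by rewrite (bigD1 j) //= eqxx mul1r big1 ?addr0 // => k /negbTE ->; rewrite mul0r.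
- exists (fun k => g1 k + g2 k); split; first by move=> k hk; rewrite h1 // h2 // addr0.
  by rewrite -big_split; apply: eq_bigr => k _; rewrite mulrDl.
- exists (fun k => c * g k); split; first by move=> k hk; rewrite h // mulr0.
  by rewrite mulr_sumr; apply: eq_bigr => k _; rewrite mulrA.
Qed.

Lemma sup_mk1 m g : (forall j : 'I_r, (m <= j)%N -> g j = 0) -> sup m (mk1 g).
Proof.
move=> h S i hi hm; rewrite ffunE big1 // => j _; case: eqP => [e|_]; last by rewrite mul0r.
by move: hi; rewrite e inE => /eqP ei; rewrite h ?mulr0 // -ei.
Qed.

Hypothesis hreg : forall (i : 'I_r) (t : R),
  ideal_gen (fun p : R => exists j : 'I_r, (j < i)%N /\ p = f j) (t * f i) ->
  ideal_gen (fun p : R => exists j : 'I_r, (j < i)%N /\ p = f j) t.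

Lemma acyc m : (m <= r)%N -> forall n x, homog n.+1 x -> sup m x -> kdiff f x = 0 ->
  exists y, homog n.+2 y /\ sup m y /\ x = kdiff f y.
Proof.
elim: m => [_ n x hx hs hd|m IH hm n x hx hs hd].
  have -> : x = 0.
    apply/ffunP => S; rewrite ffunE; case: (set_0Vmem S) => [->|[i hi]].
      by rewrite hx // cards0.
    exact: (hs S i hi).
  by exists 0; split; [exact: homog0 | split; [by move=> S i _ _; rewrite ffunE | by rewrite kdiff0]].
have hmr : (m < r)%N by [].
pose mo := Ordinal hmr.
have gtm : forall i : 'I_r, i != mo -> (m <= i)%N -> (m.+1 <= i)%N.
  move=> i ni hi; rewrite ltn_neqAle hi andbT; apply: contra ni => /eqP e.
  by apply/eqP; apply: val_inj.
pose u := [ffun T : {set 'I_r} => if mo \in T then 0 else x (mo |: T)].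
have hu : homog n u.
  move=> T hT; rewrite ffunE; case: ifP => hT' //; rewrite hx //.
  by rewrite cardsU1 hT' /= add1n eqSS.
have su : sup m u.
  move=> T i hi hmi; rewrite ffunE; case: ifP => hT' //.
  have ni : i != mo by apply: contraFneq hT' => <-.
  by apply: (hs _ i); [rewrite in_setU1 hi orbT | exact: gtm].
have du : kdiff f u = 0.
  apply/ffunP => T; rewrite [RHS]ffunE.
  case: (boolP (mo \in T)) => hT.
    by rewrite kdiffE big1 // => i hi; rewrite ffunE in_setU1 hT orbT mulr0.
  have hd' : kdiff f x (mo |: T) = 0 by rewrite hd ffunE.
  rewrite -hd' !kdiffE [LHS](bigD1 mo) //= ffunE setU11 mulr0 add0r.
  apply: eq_big => [i|i /andP [hi ni]].
    by rewrite in_setU1 negb_or andbC.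
  rewrite ffunE in_setU1 eq_sym (negbTE ni) (negbTE hT) /= ee_U1 // setUCA.
  case: (boolP (mo < i)%N) => hlt; last by rewrite mul1r.
  by rewrite (hs _ i) ?mulr0 // !inE eqxx.
have [w [hw [sw dw]]] : exists w, homog n.+1 w /\ sup m w /\ u = kdiff f w.
  case: n hx hu du => [|n'] hx hu du; last by apply: IH => //; exact: ltnW.
  have hx1 : forall i : 'I_r, (m.+1 <= i)%N -> x [set i] = 0 := fun i hi => hs _ i (set11 i) hi.
  have cyc : \sum_i f i * x [set i] = 0 by rewrite -/(d1 f x) -kdiff_set0 hd ffunE.
  set t := x [set mo].
  have hJ : Jm m (t * f mo).
    have e : t * f mo = - \sum_(i : 'I_r | (i < m)%N) f i * x [set i].
      move: cyc; rewrite (bigID (fun i : 'I_r => (i < m)%N)) /= [X in _ + X = _](bigD1 mo) /=; last by rewrite ltnn.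
      rewrite [X in _ + (_ + X)]big1 ?addr0; last first.
        by move=> i /andP [hi ni]; rewrite hx1 ?mulr0 // gtm // leqNgt.
      by move/eqP; rewrite addrC addr_eq0 mulrC => /eqP.
    rewrite e; apply: idJN; apply: idJsum => i hi; rewrite mulrC; apply: idJM.
    by apply: ideal_in; exists i.
  have ht0 : Jm m t := @hreg mo t hJ.
  have [g [hg ht]] := extract ht0.
  exists (mk1 g); split; first exact: homog_mk1.
  split; first exact: sup_mk1.
  rewrite (kdiff_deg1 f (homog_mk1 g)) d1_mk1 (homog0_kone hu); congr kscale.
  rewrite ffunE in_set0 setU0 -/t ht; apply: eq_bigr => j _; exact: mulrC.
pose W := [ffun S : {set 'I_r} => if mo \in S then w (S :\ mo) else 0].
have hW : homog n.+2 W.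
  move=> S hS; rewrite ffunE; case: ifP => hm' //; apply: hw.
  by move: hS; rewrite (cardsD1 mo S) hm' add1n eqSS.
have sW : sup m.+1 W.
  move=> S i hi hmi; rewrite ffunE; case: ifP => hm' //; apply: (sw _ i); last exact: ltnW.
  rewrite in_setD1 hi andbT; apply/eqP => e; by rewrite e /= ltnn in hmi.
have dW1 : forall U, mo \in U -> kdiff f W U = x U.
  move=> U hU.
  have -> : x U = u (U :\ mo) by rewrite ffunE setD11 setD1K.
  rewrite dw !kdiffE [RHS](bigD1 mo) ?setD11 //= setD1K // (sw U mo hU (leqnn m)) mulr0 add0r.
  apply: eq_big => [i|i hi].
    rewrite in_setD1; case: (eqVneq i mo) => [->|ni] /=; first by rewrite hU.
    by rewrite andbT.
  have ni : i != mo by apply: contraNneq hi => ->.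
  rewrite ffunE in_setU1 hU orbT setU1D1 ?(ee_D1' _ hU); last by rewrite eq_sym.
  case: (boolP (mo < i)%N) => hlt; last by rewrite mul1r.
  by rewrite (sw _ i) ?mulr0 ?setU11 // ltnW.
have dW2 : forall U, mo \notin U -> kdiff f W U = ee U mo * f mo * w U.
  move=> U hU; rewrite kdiffE (bigD1 mo) //= big1 ?addr0.
    by rewrite ffunE setU11 setU1K.
  move=> i /andP [hi ni]; rewrite ffunE in_setU1 eq_sym (negbTE ni) (negbTE hU) /=.
  by rewrite mulr0.
pose x' := x - kdiff f W.
have hx' : homog n.+1 x' by apply: homogB => //; apply: homog_kdiff.
have sx' : sup m x'.
  move=> S i hi hmi; rewrite /x' ffunBE.
  case: (boolP (mo \in S)) => hmS; first by rewrite dW1 // subrr.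
  have ni : i != mo by apply: contraNneq hmS => <-.
  by rewrite dW2 // (hs S i hi) ?(sw S i hi hmi) ?mulr0 ?subrr // gtm.
have dx' : kdiff f x' = 0 by rewrite kdiffB hd kdiff2 subrr.
have [y' [hy' [sy' ey']]] := IH (ltnW hm) n x' hx' sx' dx'.
exists (W + y'); split; first exact: homogD.
split; first by apply: supD => //; apply: sup_mono sy'.
by rewrite kdiffD -ey' /x' addrC subrK.
Qed.
End Acyc.

Lemma kscale1 x : kscale 1 x = x.
Proof. by apply/ffunP => S; rewrite ffunE mul1r. Qed.
Lemma kscale0 x : kscale 0 x = 0.
Proof. by apply/ffunP => S; rewrite !ffunE mul0r. Qed.

Lemma d1B f x y : d1 f (x - y) = d1 f x - d1 f y.
Proof. rewrite /d1 -sumrB; apply: eq_bigr => i _; rewrite !ffunE /=; ring. Qed.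
Lemma d1Z f t x : d1 f (kscale t x) = t * d1 f x.
Proof. rewrite /d1 mulr_sumr; apply: eq_bigr => i _; rewrite ffunE /=; ring. Qed.
Lemma d1_sum f (I : finType) (F : I -> kel) : d1 f (\sum_(t : I) F t) = \sum_(t : I) d1 f (F t).
Proof.
rewrite /d1 exchange_big; apply: eq_bigr => i _; rewrite sum_ffunE mulr_sumr //.
Qed.

Lemma ideal_gen_ind (P Q : R -> Prop) : (forall t, P t -> Q t) -> Q 0 ->
  (forall t u, Q t -> Q u -> Q (t + u)) -> (forall p t, Q t -> Q (p * t)) ->
  forall t, ideal_gen P t -> Q t.
Proof.
move=> hP h0 hD hM t; elim => [|p hp|p q _ hp _ hq|p q _ hq].
- exact: h0.
- exact: hP.
- exact: hD.
- exact: hM.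
Qed.

Lemma ideal_add_cl (P1 P2 : R -> Prop) (Q := ideal_add (ideal_gen P1) (ideal_gen P2)) :
  [/\ Q 0, (forall t u, Q t -> Q u -> Q (t + u)) & (forall p t, Q t -> Q (p * t))].
Proof.
split.
- by exists 0, 0; split; [exact: ideal0 | split; [exact: ideal0 | rewrite addr0]].
- move=> t u [u1 [v1 [h1 [h2 ->]]]] [u2 [v2 [h3 [h4 ->]]]].
  exists (u1 + u2), (v1 + v2); split; first exact: idealD.
  by split; [exact: idealD | rewrite /=; ring].
- move=> p t [u1 [v1 [h1 [h2 ->]]]]; exists (p * u1), (p * v1); split; first exact: idealM.
  by split; [exact: idealM | rewrite mulrDr].
Qed.

Section Main.
Variables (f : 'I_r -> R) (s : nat) (a : 'I_s -> R) (cm : 'M[R]_(r, s)).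
Hypothesis hc : forall j : 'I_s, a j = \sum_(i < r) cm i j * f i.
Local Notation J := (idealF a).
Local Notation zeta := (kzeta cm).

Lemma bnd (zs : seq kel) : (forall z, z \in zs -> J (d1 f z)) -> forall y,
  exists A : kel, (forall S, J (A S)) /\
    foldr lw (kdiff f y) zs = kscale ((-1) ^+ size zs) (kdiff f (foldr lw y zs)) + A.
Proof.
elim: zs => [|z zs IH] hz y /=.
  exists 0; split; first by move=> S; rewrite ffunE; exact: ideal0.
  by rewrite expr0 kscale1 addr0.
have hz' : forall v, v \in zs -> J (d1 f v) by move=> v hv; apply: hz; rewrite in_cons hv orbT.
have hzz : J (d1 f z) by apply: hz; exact: mem_head.
have [A [hA e]] := IH hz' y.
have L := leibniz f z (foldr lw y zs).
exists (kscale ((-1) ^+ size zs) (kscale (d1 f z) (foldr lw y zs)) + lw z A); split.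
  move=> S; rewrite ffunE kscaleE kscaleE ffunE; apply: idJD.
    by apply: idJM; apply: idJMr.
  apply: (@idJsum _ _ _ (fun i => i \in S)) => i _; apply: idJM; exact: hA.
rewrite e lwD_r lwZ_r L.
move: (lw z (kdiff f (foldr lw y zs))) (lw z A) (foldr lw y zs) => P Q Y.
apply/ffunP => S; rewrite !ffunE exprS /=.
move: (\sum_(i in S) _) ((-1) ^+ size zs) (Q S) (d1 f z * Y S) => X E q t.
ring.
Qed.

Lemma bnd_top zs y : (forall z, z \in zs -> homog 1 z) -> (forall z, z \in zs -> J (d1 f z)) ->
  J (wedge (wprod zs) (kdiff f y) setT).
Proof.
move=> hh hJ; rewrite wedge_wprod //; have [A [hA ->]] := bnd hJ y.
by rewrite ffunE kscaleE kdiffT mulr0 add0r.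
Qed.

Lemma zeta_set1 (j : 'I_s) i : zeta j [set i] = cm i j.
Proof.
rewrite /kzeta sum_ffunE (bigD1 i) //= kscaleE ffunE eqxx mulr1 big1 ?addr0 // => k nk.
by rewrite kscaleE ffunE (inj_eq set1_inj) eq_sym (negbTE nk) mulr0.
Qed.

Lemma homog_kgen i : homog 1 (kgen R i).
Proof. by move=> S hS; rewrite ffunE; case: eqP => // e; rewrite e cards1 in hS. Qed.

Lemma homog_zeta (j : 'I_s) : homog 1 (zeta j).
Proof. by apply: homog_sum => i; apply: homogZ; exact: homog_kgen. Qed.

Lemma d1_zeta (j : 'I_s) : d1 f (zeta j) = a j.
Proof. by rewrite hc /d1; apply: eq_bigr => i _; rewrite zeta_set1 mulrC. Qed.

Lemma gamma_bnd n g y : kGamma cm n g -> J (wedge g (kdiff f y) setT).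
Proof.
elim => [|x [js ->]|x1 x2 _ h1 _ h2|p x _ h].
- by rewrite wedge0_l ffunE; exact: ideal0.
- apply: bnd_top => v /mapP [k _ ->]; first exact: homog_zeta.
  by rewrite d1_zeta; apply: ideal_in; exists k.
- by rewrite wedgeD_l ffunE; apply: idJD.
- by rewrite wedgeZ_l kscaleE; apply: idJM.
Qed.

Lemma cyc_prod zs : (forall z, z \in zs -> kcycle f 1 z) ->
  kcycle f (size zs) (foldr lw (kone R r) zs).
Proof.
elim: zs => [|z zs IH] h /=; first by split; [exact: homog_kone | exact: kdiff_kone].
have [hz dz] := h z (mem_head z zs).
have [hR dR] : kcycle f (size zs) (foldr lw (kone R r) zs).
  by apply: IH => v hv; apply: h; rewrite in_cons hv orbT.
split; first exact: homog_lw.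
by rewrite leibniz dR lw0_r (d1_cycle dz) kscale0 subrr.
Qed.

Lemma a_in_Kitt (j : 'I_s) : Kitt f cm (a j).
Proof.
case: (posnP r) => [r0|rpos].
  rewrite hc big1; first exact: ideal0.
  by move=> i _; have := ltn_ord i; rewrite {2}r0.
pose etop : kel := [ffun S => (S == setT)%:R].
have he : homog r etop.
  move=> S hS; rewrite ffunE; case: eqP => // e; by rewrite e cardsT card_ord eqxx in hS.
have e1 : etop setT = 1 by rewrite ffunE eqxx.
apply: ideal_in; exists 1%N, (wprod [:: zeta j]), (kdiff f etop).
split; first exact: rpos.
split; first by apply: kspan_gen; exists [tuple j].
split.
  split; last exact: kdiff2.
  by apply: homog_kdiff; rewrite subn1 prednK.
rewrite wedge_wprod /=; last by move=> v; rewrite inE => /eqP ->; exact: homog_zeta.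
have := congr1 (fun x => x setT) (leibniz f (zeta j) etop).
rewrite kdiffT ffunBE kscaleE e1 mulr1 d1_zeta => /eqP; rewrite eq_sym subr_eq0 => /eqP ->.
by [].
Qed.

Lemma extractF t : J t -> exists dd : 'I_s -> R, t = \sum_j dd j * a j.
Proof.
elim => [|p [j ->]|p q _ [e1 ->] _ [e2 ->]|p q _ [e ->]].
- by exists (fun _ => 0); rewrite big1 // => j _; rewrite mul0r.
- exists (fun k : 'I_s => (k == j)%:R).
  by rewrite (bigD1 j) //= eqxx mul1r big1 ?addr0 // => k /negbTE ->; rewrite mul0r.
- exists (fun k : 'I_s => e1 k + e2 k).
  by rewrite -big_split; apply: eq_bigr => k _; rewrite mulrDl.
- exists (fun k : 'I_s => p * e k).
  by rewrite mulr_sumr; apply: eq_bigr => k _; rewrite mulrA.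
Qed.

Definition Gp n (X : kel) := exists (js : seq 'I_s) (zs : seq kel),
  (forall z, z \in zs -> kcycle f 1 z) /\ (size js + size zs)%N = n /\
  X = foldr lw (foldr lw (kone R r) zs) (map zeta js).

Lemma anti_move z W (vs : seq kel) :
  lw z (foldr lw W vs) = kscale ((-1) ^+ size vs) (foldr lw (lw z W) vs).
Proof.
elim: vs => [|v vs IH] /=; first by rewrite expr0 kscale1.
rewrite lw_anti IH lwZ_r; move: (lw v _) => X.
apply/ffunP => S; rewrite !ffunE exprS; move: ((-1) ^+ size vs) (X S) => E u; ring.
Qed.

Lemma span_sum (P : kel -> Prop) (I : finType) (F : I -> kel) :
  (forall t, kspan P (F t)) -> kspan P (\sum_(t : I) F t).
Proof. by move=> h; apply: (big_ind (kspan P)); [exact: kspan0 | exact: kspanD |]. Qed.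

Lemma gp_step n z (dd : 'I_s -> R) X : kcycle f 1 z -> kspan (Gp n) X ->
  kspan (Gp n.+1) (lw (z + \sum_j kscale (dd j) (zeta j)) X).
Proof.
move=> hz; elim => [|x hx|x1 x2 _ h1 _ h2|p x _ h].
- rewrite lw0_r; exact: kspan0.
- move: hx => [js [zs [hzs [hsz ->]]]].
  rewrite lwD_l lw_suml; apply: kspanD.
    rewrite anti_move; apply: kspanZ; apply: kspan_gen; exists js, (z :: zs); split.
      by move=> v; rewrite in_cons => /orP [/eqP -> //|]; exact: hzs.
    by split; first by rewrite /= addnS hsz.
  apply: span_sum => j; rewrite lwZ_l; apply: kspanZ; apply: kspan_gen.
  by exists (j :: js), zs; split => //; split; first by rewrite /= addSn hsz.
- rewrite lwD_r; exact: kspanD.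
- rewrite lwZ_r; exact: kspanZ.
Qed.

Lemma fitt_span (ms : seq kel) :
  (forall m, m \in ms -> exists z (dd : 'I_s -> R),
      kcycle f 1 z /\ m = z + \sum_j kscale (dd j) (zeta j)) ->
  kspan (Gp (size ms)) (foldr lw (kone R r) ms).
Proof.
elim: ms => [|m ms IH] h /=.
  apply: kspan_gen; exists [::], [::]; split; first by move=> ?; rewrite in_nil.
  by split.
have [z [dd [hz ->]]] := h m (mem_head m ms).
apply: gp_step => //; apply: IH => v hv; apply: h; by rewrite in_cons hv orbT.
Qed.

Lemma kitt_span X : kspan (Gp r) X -> Kitt f cm (X setT).
Proof.
elim => [|x hx|x1 x2 _ h1 _ h2|p x _ h].
- rewrite ffunE; exact: ideal0.
- move: hx => [js [zs [hzs [hsz ->]]]].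
  apply: ideal_in; exists (size js), (wprod (map zeta js)), (wprod zs).
  split; first by rewrite -hsz leq_addr.
  split; first by apply: kspan_gen; exists (in_tuple js).
  have hzh : forall v, v \in zs -> homog 1 v by move=> v hv; have [] := hzs v hv.
  have e : (r - size js)%N = size zs by move: (size zs) hsz => m hm; rewrite -hm addKn.
  split; first by rewrite e /wprod foldr_lw_hom //; exact: cyc_prod.
  rewrite wedge_wprod; last by move=> v /mapP [k _ ->]; exact: homog_zeta.
  by rewrite /wprod foldr_lw_hom.
- rewrite ffunE; exact: idealD.
- rewrite kscaleE; exact: idealM.
Qed.

Lemma fitt_kitt t : Fitt0_quot f a t -> Kitt f cm t.
Proof.
elim => [|t0 [M [hM ->]]|p q _ hp _ hq|p q _ hq]; [exact: ideal0| |exact: idealD|exact: idealM].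
pose ms := [seq mk1 (fun i => M i k) | k <- enum 'I_r].
have hsz : size ms = r by rewrite size_map size_enum_ord.
have -> : \det M = foldr lw (kone R r) ms setT.
  rewrite detT //; congr (\det _); apply/matrixP => i k.
  by rewrite mxE (nth_map k) ?size_enum_ord // nth_ord_enum mk1_set1.
apply: kitt_span.
suff : kspan (Gp (size ms)) (foldr lw (kone R r) ms) by rewrite hsz.
apply: fitt_span => m /mapP [k _ ->].
have [dd hdd] := extractF (hM k).
exists (mk1 (fun i => M i k) - \sum_j kscale (dd j) (zeta j)), dd; split; last by rewrite subrK.
have hz : homog 1 (mk1 (fun i => M i k) - \sum_j kscale (dd j) (zeta j)).
  apply: homogB; first exact: homog_mk1.
  by apply: homog_sum => j; apply: homogZ; exact: homog_zeta.
split => //; rewrite (kdiff_deg1 f hz) d1B d1_mk1 d1_sum.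
have -> : \sum_j d1 f (kscale (dd j) (zeta j)) = \sum_j dd j * a j.
  by apply: eq_bigr => j _; rewrite d1Z d1_zeta.
rewrite -hdd (eq_bigr (fun i => M i k * f i)) ?subrr ?kscale0 // => i _.
exact: mulrC.
Qed.

Lemma fitt_gen n g y : kGamma cm n g -> kspan (prod_deg1_cycles f (r - n)) y ->
  (n <= r)%N -> Fitt0_quot f a (wedge g y setT).
Proof.
move=> hg hy hn; elim: hg => [|x [js ->]|x1 x2 _ h1 _ h2|p x _ h].
- by rewrite wedge0_l ffunE; exact: ideal0.
- elim: hy => [|x0 [zs [hzs ->]]|y1 y2 _ k1 _ k2|p0 y0 _ k0].
  + by rewrite wedge0_r ffunE; exact: ideal0.
  + have hzh : forall v, v \in zs -> homog 1 v by move=> v hv; have [] := hzs v hv.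
    rewrite wedge_wprod; last by move=> v /mapP [k _ ->]; exact: homog_zeta.
    rewrite /wprod foldr_lw_hom // -foldr_cat.
    set vs := map zeta js ++ zs.
    have hs : size vs = r by rewrite size_cat size_map !size_tuple subnKC.
    apply: ideal_in; exists (\matrix_(i < r, k < r) (nth 0 vs k) [set i]); split; last first.
      exact: detT.
    move=> k.
    have -> : \sum_i (\matrix_(i < r, k < r) (nth 0 vs k) [set i]) i k * f i = d1 f (nth 0 vs k).
      by rewrite /d1; apply: eq_bigr => i _; rewrite mxE mulrC.
    have : nth 0 vs k \in vs by apply: mem_nth; rewrite hs.
    rewrite mem_cat => /orP [/mapP [j _ ->]|hv].
      by rewrite d1_zeta; apply: ideal_in; exists j.
    have [_ hd] := hzs _ hv; rewrite (d1_cycle hd); exact: ideal0.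
  + by rewrite wedgeD_r ffunE; exact: idealD.
  + by rewrite wedgeZ_r kscaleE; exact: idealM.
- by rewrite wedgeD_l ffunE; exact: idealD.
- by rewrite wedgeZ_l kscaleE; exact: idealM.
Qed.

Lemma aJ_kitt t : J t -> Kitt f cm t.
Proof.
elim => [|p [j ->]|p q _ hp _ hq|p q _ hq]; [exact: ideal0 | exact: a_in_Kitt | exact: idealD | exact: idealM].
Qed.

Lemma kitt_sub (hgen : koszul_gen_deg1 f) t : Kitt f cm t -> ideal_add (Fitt0_quot f a) J t.
Proof.
have [c0 cD cM] := ideal_add_cl
  (fun t : R => exists M : 'M[R]_r, (forall k, idealF a (\sum_i M i k * f i)) /\ t = \det M)
  (fun t : R => exists j : 'I_s, t = a j).
elim => [|t0 [n [g [z [hn [hg [hz ->]]]]]]|p q _ hp _ hq|p q _ hq]; [exact: c0 | |exact: cD|exact: cM].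
have [y [b [hy [[y' [_ hb]] ->]]]] := hgen _ _ hz.
exists (wedge g y setT), (wedge g b setT); split; first exact: (fitt_gen hg hy hn).
split; first by rewrite hb; exact: (gamma_bnd y' hg).
by rewrite wedgeD_r ffunE.
Qed.

Lemma min_gen g : kGamma cm r g -> minors_ideal cm (g setT).
Proof.
elim => [|x [js ->]|x1 x2 _ h1 _ h2|p x _ h].
- rewrite ffunE; exact: ideal0.
- rewrite /wprod foldr_lw_hom; last by move=> v /mapP [k _ ->]; exact: homog_zeta.
  rewrite detT; last by rewrite size_map size_tuple.
  apply: ideal_in; exists (fun k => tnth js k).
  congr (\det _); apply/matrixP => i k.
  by rewrite !mxE (nth_map (tnth js k)) ?size_tuple // -tnth_nth zeta_set1.
- rewrite ffunE; exact: idealD.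
- rewrite kscaleE; exact: idealM.
Qed.

Lemma min_kitt t : minors_ideal cm t -> Kitt f cm t.
Proof.
elim => [|t0 [g ->]|p q _ hp _ hq|p q _ hq]; [exact: ideal0| |exact: idealD|exact: idealM].
apply: ideal_in; exists r, (wprod (map zeta [tuple g i | i < r])), (kone R r).
split => //; split; first by apply: kspan_gen; exists [tuple g i | i < r].
split; first by rewrite subnn; split; [exact: homog_kone | exact: kdiff_kone].
rewrite wedge1r /wprod foldr_lw_hom; last by move=> v /mapP [k _ ->]; exact: homog_zeta.
rewrite detT; last by rewrite size_map size_tuple.
congr (\det _); apply/matrixP => i k.
by rewrite !mxE (nth_map (g k)) ?size_tuple // -tnth_nth tnth_mktuple zeta_set1.
Qed.

Lemma kitt_sub_min (hac : forall n x, kcycle f n.+1 x -> kbound f n.+1 x) t :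
  Kitt f cm t -> ideal_add (minors_ideal cm) J t.
Proof.
have [c0 cD cM] := ideal_add_cl
  (fun t : R => exists g : 'I_r -> 'I_s, t = \det (colsub g cm))
  (fun t : R => exists j : 'I_s, t = a j).
elim => [|t0 [n [g [z [hn [hg [hz ->]]]]]]|p q _ hp _ hq|p q _ hq]; [exact: c0 | |exact: cD|exact: cM].
case: (ltnP n r) => hnr.
  have e : (r - n)%N = (r - n).-1.+1 by rewrite prednK // subn_gt0.
  rewrite e in hz; have [y [_ ->]] := hac _ _ hz.
  exists 0, (wedge g (kdiff f y) setT); split; first exact: ideal0.
  by split; [exact: (gamma_bnd y hg) | rewrite add0r].
have e : n = r by apply/eqP; rewrite eqn_leq hn hnr.
subst n; move: hz; rewrite subnn => -[hz _].
rewrite (homog0_kone hz) wedgeZ_r kscaleE wedge1r.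
exists (z set0 * g setT), 0; split; first by apply: idealM; exact: min_gen.
by split; [exact: ideal0 | rewrite addr0].
Qed.
End Main.

Lemma ar_gen (f : 'I_r -> R) : almost_regular f -> koszul_gen_deg1 f.
Proof.
move=> [_ [_ hH]] [|[|n]] x hx.
- exists x, 0; split; last split.
  + rewrite (homog0_kone hx.1); apply: kspanZ; apply: kspan_gen.
    by exists [tuple]; split => // z; rewrite in_nil.
  + by exists 0; split; [exact: homog0 | rewrite kdiff0].
  + by rewrite addr0.
- exists x, 0; split; last split.
  + apply: kspan_gen; exists [tuple x]; split.
      by move=> z; rewrite inE => /eqP ->.
    by rewrite /wprod /= wedge1r.
  + by exists 0; split; [exact: homog0 | rewrite kdiff0].
  + by rewrite addr0.
- exists 0, x; split; first exact: kspan0.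
  by split; [exact: hH | rewrite add0r].
Qed.

Lemma reg_acyc (f : 'I_r -> R) : regular_seq f ->
  forall n x, kcycle f n.+1 x -> kbound f n.+1 x.
Proof.
move=> [hreg _] n x [hx hd].
have hs : sup r x by move=> S i _ hi; move: (ltn_ord i); rewrite ltnNge hi.
have [y [hy [_ e]]] := acyc hreg (leqnn r) hx hs hd.
by exists y.
Qed.
End K.

Unset Implicit Arguments.
Set Strict Implicit.
Theorem corollary4p24 (R : comPzRingType) (r : nat) (f : 'I_r -> R) :
  (koszul_gen_deg1 f ->
     forall (s : nat) (a : 'I_s -> R) (c : 'M[R]_(r, s)),
       (forall j, a j = \sum_(i < r) c i j * f i) ->
       ideal_eq (Kitt f c) (ideal_add (Fitt0_quot f a) (idealF a)))
  /\
  (almost_regular f ->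
     forall (s : nat) (a : 'I_s -> R) (c : 'M[R]_(r, s)),
       (forall j, a j = \sum_(i < r) c i j * f i) ->
       ideal_eq (Kitt f c) (ideal_add (Fitt0_quot f a) (idealF a)))
  /\
  (regular_seq f ->
     forall (s : nat) (a : 'I_s -> R) (Phi : 'M[R]_(r, s)),
       (forall j, a j = \sum_(i < r) Phi i j * f i) ->
       ideal_eq (Kitt f Phi) (ideal_add (minors_ideal Phi) (idealF a))).
Proof.
have P1 : koszul_gen_deg1 f -> forall (s : nat) (a : 'I_s -> R) (c : 'M[R]_(r, s)),
       (forall j, a j = \sum_(i < r) c i j * f i) ->
       ideal_eq (Kitt f c) (ideal_add (Fitt0_quot f a) (idealF a)).
  move=> hg s a c hc x; split; first exact: (kitt_sub hc hg).
  move=> [u [v [hu [hv ->]]]]; apply: idealD.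
    exact: (fitt_kitt hc hu).
  exact: (aJ_kitt hc hv).
split; first exact: P1.
split; first by move=> har; apply: P1; exact: ar_gen.
move=> hreg s a Phi hc x; split; first exact: (kitt_sub_min hc (reg_acyc hreg)).
move=> [u [v [hu [hv ->]]]]; apply: idealD.
  exact: (min_kitt f hu).
exact: (aJ_kitt hc hv).
Qed.
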